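(* For any signed graphs $(G,\sigma)$ and $(H,\tau)$, $$\chi_c\big((G,\sigma)\square'(H,\tau)\big)\le 2\max\{\chi_c(G),\chi_c(H)\},$$ where $\chi_c(G),\chi_c(H)$ are the circular chromatic numbers of the underlying unsigned graphs.
   Context: A signed graph $(G,\sigma)$ is a finite graph $G$ (multiple edges allowed, no loops) with a signature $\sigma:E(G)\to\{+1,-1\}$. For real $r\ge 2$, $C^r$ is the circle of circumference $r$, $d_{C^r}(x,y)=\min\{|x-y|,r-|x-y|\}$, $\overline{x}=x+r/2\pmod r$. A circular $r$-coloring of $(G,\sigma)$ is $f:V(G)\to C^r$ with $d_{C^r}(f(u),f(v))\ge1$ for each positive edge $uv$ and $d_{C^r}(f(u),\overline{f(v)})\ge1$ for each negative edge $uv$; $\chi_c(G,\sigma)$ is the infimum of such $r\ge2$. For an unsigned graph $G$, a circular $r$-coloring requires $d_{C^r}(f(u),f(v))\ge1$ for every edge, and $\chi_c(G)$ is the infimum of such $r$. Vertex signs: fix an orientation of $G$; for $u\in V(G)$ let $\sigma(u)=\prod_{e\in E_u}\sigma(e)^{\epsilon(e,u)}$, where $E_u$ is the set of edges incident to $u$ and $\epsilon(e,u)=1$ if $e$ is oriented away from $u$ and $-1$ otherwise; similarly $\tau(x)$ for $x\in V(H)$. The Type 2 Cartesian product $(G,\sigma)\square'(H,\tau)$ has vertex set $V(G)\times V(H)$, with $(u,x)(v,y)$ an edge iff either $u=v$ and $xy\in E(H)$, or $x=y$ and $uv\in E(G)$; the edge $(u,x)(v,x)$ has sign $\sigma(uv)\tau(x)$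 and the edge $(u,x)(u,y)$ has sign $\sigma(u)\tau(xy)$. *)

(* Defs.v *)
From HB Require Import structures.
From mathcomp Require Import all_boot all_order all_algebra.
From mathcomp Require Import classical_sets reals.
Set Implicit Arguments. Unset Strict Implicit. Unset Printing Implicit Defensive.
Import Order.TTheory GRing.Theory Num.Theory.
Local Open Scope ring_scope.
Local Open Scope classical_set_scope.

(* A (multi)graph: finite vertex type V, finite edge type E, each edge e
   has endpoints src e and tgt e (this also fixes an orientation of e,
   from src e to tgt e); loops are excluded by a separate hypothesis
   [forall e, src e != tgt e].  A signature is [sig : E -> bool], where
   [true] encodes the sign -1 and [false] the sign +1; product of signs
   is therefore [addb] (xor) and inversion is the identity. *)

(* distance on the circle C^r, points represented in [0, r) *)
Definition cdist {R : realType} (r x y : R) : R :=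
  Num.min `|x - y| (r - `|x - y|).

Definition antipode {R : realType} (r x : R) : R :=
  if x + r / 2 < r then x + r / 2 else x - r / 2.

Definition signed_circ_coloring {R : realType} {V E : finType}
  (src tgt : E -> V) (sig : E -> bool) (r : R) (f : V -> R) : Prop :=
  (forall v, 0 <= f v < r) /\
  (forall e, if sig e then 1 <= cdist r (f (src e)) (antipode r (f (tgt e)))
             else 1 <= cdist r (f (src e)) (f (tgt e))).

Definition circ_coloring {R : realType} {V E : finType}
  (src tgt : E -> V) (r : R) (f : V -> R) : Prop :=
  (forall v, 0 <= f v < r) /\
  (forall e, 1 <= cdist r (f (src e)) (f (tgt e))).

Definition chi_c_signed {R : realType} {V E : finType}
  (src tgt : E -> V) (sig : E -> bool) : R :=
  inf [set r : R | 2 <= r /\ exists f, signed_circ_coloring src tgt sig r f].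

Definition chi_c {R : realType} {V E : finType} (src tgt : E -> V) : R :=
  inf [set r : R | 2 <= r /\ exists f, circ_coloring src tgt r f].

(* vertex sign: product over incident edges e of sig(e)^{eps(e,u)};
   since sig(e) = +-1 is its own inverse, the exponent eps(e,u) = +-1
   is immaterial, so this is the xor of the signs of incident edges. *)
Definition vertex_sign {V E : finType} (src tgt : E -> V) (sig : E -> bool)
  (u : V) : bool :=
  \big[addb/false]_(e | (src e == u) || (tgt e == u)) sig e.

(* Type 2 Cartesian product: vertices V1 * V2; edges
   inl (e, x) : (src1 e, x) -- (tgt1 e, x), sign sig1 e * tau(x)
   inr (u, f) : (u, src2 f) -- (u, tgt2 f), sign sigma(u) * sig2 f *)
Section Prod.
Context {V1 E1 V2 E2 : finType} (src1 tgt1 : E1 -> V1) (sig1 : E1 -> bool)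
  (src2 tgt2 : E2 -> V2) (sig2 : E2 -> bool).

Definition prod_src (k : (E1 * V2 + V1 * E2)%type) : (V1 * V2)%type :=
  match k with inl (e, x) => (src1 e, x) | inr (u, f) => (u, src2 f) end.
Definition prod_tgt (k : (E1 * V2 + V1 * E2)%type) : (V1 * V2)%type :=
  match k with inl (e, x) => (tgt1 e, x) | inr (u, f) => (u, tgt2 f) end.
Definition prod_sig (k : (E1 * V2 + V1 * E2)%type) : bool :=
  match k with
  | inl (e, x) => addb (sig1 e) (vertex_sign src2 tgt2 sig2 x)
  | inr (u, f) => addb (vertex_sign src1 tgt1 sig1 u) (sig2 f)
  end.
End Prod.

(* Main.v *)
Require Import Defs.
From HB Require Import structures.
From mathcomp Require Import all_boot all_order all_algebra.
From mathcomp Require Import classical_sets reals.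
From mathcomp Require Import ring lra.
Import Order.TTheory GRing.Theory Num.Theory.
Local Open Scope ring_scope.
Lemma abs_cases {R : realType} (x : R) : (0 <= x /\ `|x| = x) \/ (x < 0 /\ `|x| = - x).
Proof. case: (lerP 0 x) => h; [left; rewrite ger0_norm | right; rewrite ltr0_norm]. all: by []. Qed.

Lemma cd_ge1 {R : realType} (r a b : R) : 1 <= cdist r a b -> 1 <= `|a - b| /\ `|a - b| <= r - 1.
Proof. rewrite /cdist le_min => /andP[h1 h2]; split => //; lra. Qed.

Lemma key {R : realType} (s p q : R) : 1 <= `|p - q| -> `|p - q| <= s - 1 ->
  1 <= cdist (2 * s) p q /\ 1 <= cdist (2 * s) p (antipode (2 * s) q).
Proof.
move=> h1 h2; rewrite /cdist /antipode !le_min.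
have e : 2 * s / 2 = s by field.
rewrite e; case: ifP => _.
- have -> : p - (q + s) = (p - q) - s by ring.
  case: (abs_cases (p - q)) => [[h3 h4]|[h3 h4]]; rewrite h4 in h1 h2;
  case: (abs_cases (p - q - s)) => [[h5 h6]|[h5 h6]]; rewrite ?h4 h6;
  split; apply/andP; split; lra.
- have -> : p - (q - s) = (p - q) + s by ring.
  case: (abs_cases (p - q)) => [[h3 h4]|[h3 h4]]; rewrite h4 in h1 h2;
  case: (abs_cases (p - q + s)) => [[h5 h6]|[h5 h6]]; rewrite ?h4 h6;
  split; apply/andP; split; lra.
Qed.

Lemma colorable (R : realType) (V E : finType) (src tgt : E -> V)
  (noloop : forall e, src e != tgt e) :
  exists r : R, 2 <= r /\ exists f, circ_coloring src tgt r f.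
Proof.
pose n := #|V|.
exists (n.+2)%:R; split; first by rewrite ler_nat.
exists (fun v => (enum_rank v : nat)%:R); split.
  move=> v; rewrite ler0n /= ltr_nat.
  have := ltn_ord (enum_rank v); rewrite -/n => h; apply: (ltn_trans h); exact: leqnSn.
move=> e; rewrite /cdist le_min.
have hne : (enum_rank (src e) : nat) != enum_rank (tgt e).
  by apply/negP => /eqP /ord_inj /enum_rank_inj /eqP; apply/negP.
have b1 : ((enum_rank (src e) : nat)%:R : R) < n%:R by rewrite ltr_nat ltn_ord.
have b2 : ((enum_rank (tgt e) : nat)%:R : R) < n%:R by rewrite ltr_nat ltn_ord.
have z1 : (0:R) <= (enum_rank (src e) : nat)%:R by [].
have z2 : (0:R) <= (enum_rank (tgt e) : nat)%:R by [].
have hS : ((n.+2)%:R : R) = n%:R + 2 by rewrite -addn2 natrD.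
have hd : ((enum_rank (src e) : nat)%:R + 1 <= ((enum_rank (tgt e) : nat)%:R : R)) \/
          ((enum_rank (tgt e) : nat)%:R + 1 <= ((enum_rank (src e) : nat)%:R : R)).
  case: (ltngtP (enum_rank (src e)) (enum_rank (tgt e))) hne => // h _.
  - by left; rewrite natr1 ler_nat.
  - by right; rewrite natr1 ler_nat.
rewrite hS.
case: (abs_cases ((enum_rank (src e) : nat)%:R - ((enum_rank (tgt e) : nat)%:R : R)))
  => [[h1 h2]|[h1 h2]]; rewrite h2; case: hd => hd; apply/andP; split; lra.
Qed.

Theorem theorem3 (R : realType)
  (V1 E1 : finType) (src1 tgt1 : E1 -> V1) (sig1 : E1 -> bool)
  (noloop1 : forall e, src1 e != tgt1 e)
  (V2 E2 : finType) (src2 tgt2 : E2 -> V2) (sig2 : E2 -> bool)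
  (noloop2 : forall e, src2 e != tgt2 e) :
  chi_c_signed (R := R)
    (prod_src src1 src2) (prod_tgt tgt1 tgt2)
    (prod_sig src1 tgt1 sig1 src2 tgt2 sig2)
  <= 2 * Num.max (chi_c (R := R) src1 tgt1) (chi_c (R := R) src2 tgt2).
Proof.
rewrite /chi_c_signed /chi_c.
set S := (X in inf X <= _).
set S1 := (X in Num.max (inf X) _).
set S2 := (X in Num.max _ (inf X)).
have lb1 : has_lbound S1 by exists 2 => x [].
have lb2 : has_lbound S2 by exists 2 => x [].
have lb : has_lbound S by exists 2 => x [].
have ne1 : (S1 !=set0)%classic by have [r hr] := @colorable R _ _ _ _ noloop1; exists r.
have ne2 : (S2 !=set0)%classic by have [r hr] := @colorable R _ _ _ _ noloop2; exists r.
set a := inf S1; set b := inf S2.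
have hM1 : a <= Num.max a b by rewrite le_max lexx.
have hM2 : b <= Num.max a b by rewrite le_max lexx orbT.
apply/ler_addgt0Pr => eps eps0.
have e2 : 0 < eps / 2 by lra.
have [r1 [r1ge [f1 [hf1r hf1e]]] r1lt] := inf_adherent e2 (conj ne1 lb1).
have [r2 [r2ge [f2 [hf2r hf2e]]] r2lt] := inf_adherent e2 (conj ne2 lb2).
set s := Num.max r1 r2.
have hs1 : r1 <= s by rewrite le_max lexx.
have hs2 : r2 <= s by rewrite le_max lexx orbT.
have hsM : s <= Num.max a b + eps / 2.
  by rewrite ge_max; apply/andP; split; lra.
have Sin : S (2 * s).
  split; first lra.
  exists (fun uv => f1 uv.1 + f2 uv.2); split.
    move=> [u x] /=; have := hf1r u; have := hf2r x.
    move=> /andP[h1 h2] /andP[h3 h4]; apply/andP; split; lra.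
  move=> [[e x]|[u e]] /=.
  - have [h1 h2] := @cd_ge1 _ _ _ _ (hf1e e).
    have E : f1 (src1 e) + f2 x - (f1 (tgt1 e) + f2 x) = f1 (src1 e) - f1 (tgt1 e) by ring.
    have g1 : 1 <= `|f1 (src1 e) + f2 x - (f1 (tgt1 e) + f2 x)| by rewrite E.
    have g2 : `|f1 (src1 e) + f2 x - (f1 (tgt1 e) + f2 x)| <= s - 1 by rewrite E; lra.
    have [k1 k2] := @key R s _ _ g1 g2.
    by case: ifP.
  - have [h1 h2] := @cd_ge1 _ _ _ _ (hf2e e).
    have E : f1 u + f2 (src2 e) - (f1 u + f2 (tgt2 e)) = f2 (src2 e) - f2 (tgt2 e) by ring.
    have g1 : 1 <= `|f1 u + f2 (src2 e) - (f1 u + f2 (tgt2 e))| by rewrite E.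
    have g2 : `|f1 u + f2 (src2 e) - (f1 u + f2 (tgt2 e))| <= s - 1 by rewrite E; lra.
    have [k1 k2] := @key R s _ _ g1 g2.
    by case: ifP.
have := ge_inf lb Sin.
lra.
Qed.
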